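(* Let $\Gamma=\mathbb{Z}^\ell$, let $\sigma:\Gamma\to\Gamma$ be a group homomorphism, let $\mathcal{A}$ be a finite list of elements of $\Gamma$ and $\sigma(\mathcal{A})$ the list of images, and let $G=(S^1)^p\times\mathbb{R}^q$ with $p>0$. Then $$\chi^G_{\sigma(\mathcal{A})}(0)=|\det(\sigma)|^p\cdot\chi^G_{\mathcal{A}}(0).$$
   Context: For a sublist $\mathcal{S}$ (sublists distinguished by index) of a finite list in a finitely generated abelian group $\Gamma$: $r_{\mathcal{S}}$ is the rank of $\langle\mathcal{S}\rangle$, $m(\mathcal{S};G)=\#\mathrm{Hom}((\Gamma/\langle\mathcal{S}\rangle)_{\mathrm{tor}},G)$, and the $G$-characteristic polynomial is $\chi^G_{\mathcal{A}}(t)=\sum_{\mathcal{S}\subset\mathcal{A}}(-1)^{\#\mathcal{S}}m(\mathcal{S};G)\,t^{r_\Gamma-r_{\mathcal{S}}}$, where $r_\Gamma$ is the rank of $\Gamma$. *)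

(* Defs.v *)
From Stdlib Require Import Reals ClassicalEpsilon.
From HB Require Import structures.
From mathcomp Require Import all_boot all_order all_algebra.
Set Implicit Arguments. Unset Strict Implicit. Unset Printing Implicit Defensive.
Import Order.TTheory GRing.Theory Num.Theory.
Local Open Scope ring_scope.

(* Gamma = Z^l is modelled as integer row vectors 'rV[int]_l. *)
Notation Gam l := 'rV[int]_l.

(* An element: p points of R^2 (meant to lie on the unit circle, complex
   multiplication) and q reals (addition). *)
Record Gel (p q : nat) := mkGel { circ : 'I_p -> (R * R)%type ; lin : 'I_q -> R }.

Definition cmul (z w : R * R) : R * R :=
  (Rminus (Rmult z.1 w.1) (Rmult z.2 w.2), Rplus (Rmult z.1 w.2) (Rmult z.2 w.1)).

Definition gmul p q (g h : Gel p q) : Gel p q :=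
  mkGel (fun i => cmul (circ g i) (circ h i)) (fun j => Rplus (lin g j) (lin h j)).

Definition gone p q : Gel p q := mkGel (fun _ : 'I_p => (R1, R0)) (fun _ : 'I_q => R0).

Definition inG p q (g : Gel p q) : Prop :=
  forall i, Rplus (Rmult (circ g i).1 (circ g i).1) (Rmult (circ g i).2 (circ g i).2) = R1.

Definition geq p q (g h : Gel p q) : Prop :=
  (forall i, circ g i = circ h i) /\ (forall j, lin g j = lin h j).

(* A sublist of A is a set of indices of A. <S> = Z-span. *)
Definition inSpan l (A : seq (Gam l)) (S : {set 'I_(size A)}) (v : Gam l) : Prop :=
  exists c : 'I_(size A) -> int, v = \sum_(i in S) c i *: A`_i.

(* preimage in Gamma of (Gamma/<S>)_tor *)
Definition inTor l (A : seq (Gam l)) (S : {set 'I_(size A)}) (v : Gam l) : Prop :=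
  exists n : nat, (0 < n)%N /\ inSpan S (v *+ n).

(* Homomorphisms (Gamma/<S>)_tor -> G, represented as maps on the torsion
   preimage that are additive there and trivial on <S>. *)
Definition isHomTor l p q (A : seq (Gam l)) (S : {set 'I_(size A)})
    (f : Gam l -> Gel p q) : Prop :=
  (forall x, inTor S x -> inG (f x)) /\
  (forall x y, inTor S x -> inTor S y -> geq (f (x + y)) (gmul (f x) (f y))) /\
  (forall s, inSpan S s -> geq (f s) (gone p q)).

(* two such maps induce the same homomorphism on the quotient *)
Definition homEq l p q (A : seq (Gam l)) (S : {set 'I_(size A)})
    (f g : Gam l -> Gel p q) : Prop :=
  forall x, inTor S x -> geq (f x) (g x).

Definition homCount l p q (A : seq (Gam l)) (S : {set 'I_(size A)}) (N : nat) : Prop :=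
  exists hs : seq (Gam l -> Gel p q),
    size hs = N /\
    (forall i, (i < N)%N -> isHomTor S (nth (fun _ => gone p q) hs i)) /\
    (forall i j, (i < N)%N -> (j < N)%N -> i <> j ->
        ~ homEq S (nth (fun _ => gone p q) hs i) (nth (fun _ => gone p q) hs j)) /\
    (forall f, isHomTor S f ->
        exists2 i, (i < N)%N & homEq S f (nth (fun _ => gone p q) hs i)).

Definition mult l p q (A : seq (Gam l)) (S : {set 'I_(size A)}) : nat :=
  epsilon (inhabits 0%N) (fun N => homCount p q S N).

Definition rk l (A : seq (Gam l)) (S : {set 'I_(size A)}) : nat :=
  \rank (\matrix_(i < size A) (if i \in S then map_mx (intr : int -> rat) A`_i else 0)).

Definition chiG l p q (A : seq (Gam l)) : {poly int} :=
  \sum_(S : {set 'I_(size A)})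
     (((-1) ^+ #|S| * (mult p q S)%:R) *: 'X^(l - rk S)).

(* sigma : Gamma -> Gamma given by an integer matrix acting on row vectors *)
Definition applyHom l (M : 'M[int]_l) (v : Gam l) : Gam l := v *m M.

(* Main.v *)
Require Import Defs.
From Stdlib Require Import Reals ClassicalEpsilon Lra Lia ZArith FunctionalExtensionality PropExtensionality.
From HB Require Import structures.
From mathcomp Require Import all_boot all_order all_algebra zify.
Set Implicit Arguments. Unset Strict Implicit. Unset Printing Implicit Defensive.
Import Order.TTheory GRing.Theory Num.Theory.
Local Open Scope ring_scope.

Definition toR (z : int) : R :=
  match z with Posz n => INR n | Negz n => Ropp (INR n.+1) end.

Lemma toR_nat (n : nat) : toR (Posz n) = INR n. Proof. by []. Qed.

Lemma toR_sub (a b : nat) : toR (Posz a - Posz b) = Rminus (INR a) (INR b).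
Proof.
case: (leqP b a) => hab.
  rewrite subzn // toR_nat minus_INR //; exact/ssrnat.leP.
have -> : (Posz a - Posz b) = - Posz (b - a)%N.
  by rewrite -opprB subzn // ltnW.
have : (0 < b - a)%N by rewrite subn_gt0.
case E: (b - a)%N => [|k] // _.
have H1 : INR (b - a) = Rminus (INR b) (INR a).
  by rewrite minus_INR //; apply/ssrnat.leP; rewrite ltnW.
rewrite E in H1. change (Ropp (INR k.+1) = Rminus (INR a) (INR b)). rewrite H1. ring.
Qed.

Lemma int_decomp (z : int) : exists a b : nat, z = Posz a - Posz b.
Proof. case: z => n; [exists n, 0%N | exists 0%N, n.+1]; by rewrite ?subr0 ?sub0r ?NegzE. Qed.

Lemma toR_add (x y : int) : toR (x + y) = Rplus (toR x) (toR y).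
Proof.
have [a [b ->]] := int_decomp x; have [c [d ->]] := int_decomp y.
have -> : Posz a - Posz b + (Posz c - Posz d) = Posz (a + c) - Posz (b + d).
  by lia.
rewrite !toR_sub !plus_INR; ring.
Qed.

Lemma toR_mul (x y : int) : toR (x * y) = Rmult (toR x) (toR y).
Proof.
have [a [b ->]] := int_decomp x; have [c [d ->]] := int_decomp y.
have -> : (Posz a - Posz b) * (Posz c - Posz d) = Posz (a * c + b * d) - Posz (a * d + b * c).
  by nia.
rewrite !toR_sub !plus_INR !mult_INR; ring.
Qed.

Lemma toR_opp (x : int) : toR (- x) = Ropp (toR x).
Proof.
have [a [b ->]] := int_decomp x.
rewrite opprB !toR_sub; ring.
Qed.

Lemma toR_inj (x y : int) : toR x = toR y -> x = y.
Proof.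
move=> h; apply/eqP; rewrite -subr_eq0; apply/eqP.
have : toR (x - y) = R0 by rewrite toR_add toR_opp h; ring.
case: (x - y) => n /=.
  by move=> h0; rewrite (INR_eq n 0 h0).
move=> h0; have := pos_INR n; have := S_INR n; change (Ropp (INR n.+1) = R0) in h0; lra.
Qed.

Definition ofZ (k : Z) : int := Posz (Z.to_nat k) - Posz (Z.to_nat (- k)).

Lemma toR_ofZ k : toR (ofZ k) = IZR k.
Proof.
rewrite /ofZ toR_sub.
case: k => [|p|p] /=.
- simpl; lra.
- rewrite <- positive_nat_Z, <- INR_IZR_INZ; simpl; lra.
- rewrite <- Pos2Z.opp_pos, opp_IZR, <- positive_nat_Z, <- INR_IZR_INZ; simpl; lra.
Qed.

Section Trig.
Local Open Scope R_scope.

Definition cpow (z : R * R) (n : nat) : R * R := iter n (cmul z) (R1, R0).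

Lemma cmul_cs a b : cmul (cos a, sin a) (cos b, sin b) = (cos (a + b), sin (a + b)).
Proof. rewrite /cmul /= cos_plus sin_plus; f_equal; ring. Qed.

Lemma cpow_cs a n : cpow (cos a, sin a) n = (cos (INR n * a), sin (INR n * a)).
Proof.
elim: n => [|n IH].
  by rewrite /= Rmult_0_l cos_0 sin_0.
change (cpow (cos a, sin a) n.+1) with (cmul (cos a, sin a) (cpow (cos a, sin a) n)).
rewrite IH cmul_cs S_INR; f_equal; f_equal; ring.
Qed.

Lemma cs_int t : cos (2 * PI * toR t) = 1 /\ sin (2 * PI * toR t) = 0.
Proof.
case: t => n.
  change (toR (Posz n)) with (INR n).
  have -> : 2 * PI * INR n = 0 + 2 * INR n * PI by ring.
  by rewrite cos_period sin_period cos_0 sin_0.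
change (toR (Negz n)) with (- INR n.+1).
have -> : 2 * PI * - INR n.+1 = - (0 + 2 * INR n.+1 * PI) by ring.
rewrite cos_neg sin_neg cos_period sin_period cos_0 sin_0; split; ring.
Qed.

Lemma cos1_int x : cos x = 1 -> exists t, x = 2 * PI * toR t.
Proof.
move=> h.
have h2 : sin (x / 2) = 0.
  have := cos_2a_sin (x / 2).
  have -> : 2 * (x / 2) = x by field.
  rewrite h => e. have : sin (x/2) * sin (x/2) = 0 by lra.
  by move/Rmult_integral => [].
have [k hk] := sin_eq_0_0 _ h2.
exists (ofZ k); rewrite toR_ofZ.
have -> : x = 2 * (x / 2) by field.
rewrite hk; ring.
Qed.

Lemma polar z1 z2 : z1 * z1 + z2 * z2 = 1 -> exists a, (z1, z2) = (cos a, sin a).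
Proof.
move=> h.
have hb : -1 <= z1 <= 1 by split; nra.
have hs : sqrt (1 - z1²) = Rabs z2.
  have -> : 1 - z1² = z2² by rewrite /Rsqr; lra.
  by rewrite sqrt_Rsqr_abs.
case: (Rle_dec 0 z2) => hz.
  exists (acos z1); rewrite cos_acos // sin_acos // hs Rabs_right //; lra.
exists (- acos z1); rewrite cos_neg sin_neg cos_acos // sin_acos // hs Rabs_left; last lra.
by rewrite Ropp_involutive.
Qed.

End Trig.

Definition cc (D : nat) (n : int) : R * R :=
  (cos (Rdiv (Rmult (Rmult 2 PI) (toR n)) (INR D)),
   sin (Rdiv (Rmult (Rmult 2 PI) (toR n)) (INR D))).

Section CC.
Local Open Scope R_scope.

Lemma cc_add D a b : cc D (a + b)%R = cmul (cc D a) (cc D b).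
Proof.
rewrite /cc cmul_cs toR_add /Rdiv; f_equal; f_equal; ring.
Qed.

Lemma cc_unit D n : (cc D n).1 * (cc D n).1 + (cc D n).2 * (cc D n).2 = 1.
Proof. rewrite /=; have := sin2_cos2 (2 * PI * toR n / INR D); rewrite /Rsqr; lra. Qed.

Lemma INR_pos D : (0 < D)%N -> INR D <> 0.
Proof. move=> h; apply: not_0_INR; lia. Qed.

Lemma cc_mul D t : (0 < D)%N -> cc D (Posz D * t)%R = (R1, R0).
Proof.
move=> hD; rewrite /cc toR_mul toR_nat.
have -> : 2 * PI * (INR D * toR t) / INR D = 2 * PI * toR t by field; apply: INR_pos.
by have [-> ->] := cs_int t.
Qed.

Lemma cc_eq D a b : (0 < D)%N -> cc D a = cc D b -> exists t, (a - b)%R = (Posz D * t)%R.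
Proof.
move=> hD [h1 h2].
set x := 2 * PI * toR a / INR D in h1 h2; set y := 2 * PI * toR b / INR D in h1 h2.
have hc : cos (x - y) = 1.
  rewrite cos_minus h1 h2; have := sin2_cos2 y; rewrite /Rsqr; lra.
have [t ht] := cos1_int hc.
exists t; apply: toR_inj.
rewrite toR_mul toR_add toR_opp toR_nat.
have hD' := INR_pos hD.
have hp := PI_RGT_0.
apply: (Rmult_eq_reg_l (2 * PI / INR D)); last first.
  apply: Rmult_integral_contrapositive; split; [lra|]; apply: Rinv_neq_0_compat => //.
have e1 : 2 * PI / INR D * (toR a + - toR b) = x - y by rewrite /x /y; field.
have e2 : 2 * PI / INR D * (INR D * toR t) = 2 * PI * toR t by field.
by rewrite e1 e2.
Qed.

Lemma cc_root D d z1 z2 : (0 < d)%N -> (d %| D)%N -> (0 < D)%N ->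
  z1 * z1 + z2 * z2 = 1 -> cpow (z1, z2) d = (R1, R0) ->
  exists s : int, (z1, z2) = cc D (s * Posz (D %/ d))%R.
Proof.
move=> hd hdD hD hz hp.
have [x hx] := polar hz.
rewrite hx cpow_cs in hp; case: hp => hp1 _.
have [s hs] := cos1_int hp1.
exists s; rewrite hx /cc toR_mul toR_nat.
have eD : INR D = INR (D %/ d) * INR d by rewrite -mult_INR multE (divnK hdD).
have hd' := INR_pos hd.
have hq : INR (D %/ d) <> 0.
  apply: INR_pos; by rewrite divn_gt0 // dvdn_leq.
have -> : x = 2 * PI * toR s / INR d.
  rewrite -hs; field; auto.
by rewrite eD; f_equal; f_equal; field.
Qed.

End CC.

Section Abs.
Variables l p q : nat.
Implicit Types sp : Gam l -> Prop.
Definition inTorS sp (v : Gam l) := exists n : nat, (0 < n)%N /\ sp (v *+ n).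
Definition isHomS sp (f : Gam l -> Gel p q) : Prop :=
  (forall x, inTorS sp x -> inG (f x)) /\
  (forall x y, inTorS sp x -> inTorS sp y -> Defs.geq (f (x + y)) (gmul (f x) (f y))) /\
  (forall s, sp s -> Defs.geq (f s) (gone p q)).
Definition homEqS sp (f g : Gam l -> Gel p q) : Prop :=
  forall x, inTorS sp x -> Defs.geq (f x) (g x).
Definition homCountS sp (N : nat) : Prop :=
  exists hs : seq (Gam l -> Gel p q),
    size hs = N /\
    (forall i, (i < N)%N -> isHomS sp (nth (fun _ => gone p q) hs i)) /\
    (forall i j, (i < N)%N -> (j < N)%N -> i <> j ->
        ~ homEqS sp (nth (fun _ => gone p q) hs i) (nth (fun _ => gone p q) hs j)) /\
    (forall f, isHomS sp f ->
        exists2 i, (i < N)%N & homEqS sp f (nth (fun _ => gone p q) hs i)).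

Lemma homCount_S (A : seq (Gam l)) (S : {set 'I_(size A)}) N :
  homCount p q S N <-> homCountS (inSpan S) N.
Proof. by []. Qed.

Lemma homCountS_ext sp1 sp2 N : (forall v, sp1 v <-> sp2 v) ->
  homCountS sp1 N -> homCountS sp2 N.
Proof.
move=> h; have -> // : sp1 = sp2.
apply: functional_extensionality => v; apply: propositional_extensionality; exact: h.
Qed.

Lemma homEqS_sym sp f g : homEqS sp f g -> homEqS sp g f.
Proof. by move=> h x /h [h1 h2]; split=> i; rewrite ?h1 ?h2. Qed.

Lemma homEqS_trans sp f g h : homEqS sp f g -> homEqS sp g h -> homEqS sp f h.
Proof.
move=> h1 h2 x hx; have [a1 b1] := h1 x hx; have [a2 b2] := h2 x hx.
by split=> i; rewrite ?a1 ?a2 ?b1 ?b2.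
Qed.

Lemma homCountS_le sp N1 N2 : homCountS sp N1 -> homCountS sp N2 -> (N1 <= N2)%N.
Proof.
move=> [hs1 [s1 [H1 [D1 E1]]]] [hs2 [s2 [H2 [D2 E2]]]].
have : forall i : 'I_N1, exists j : 'I_N2,
    homEqS sp (nth (fun _ => gone p q) hs1 i) (nth (fun _ => gone p q) hs2 j).
  move=> i; have [j hj e] := E2 _ (H1 _ (ltn_ord i)).
  by exists (Ordinal hj).
case/fin_all_exists => F hF.
rewrite -(card_ord N1) -(card_ord N2); apply: (@leq_card _ _ F) => i i' e.
apply/val_inj/eqP; apply/negPn/negP => /eqP ne.
apply: (D1 _ _ (ltn_ord i) (ltn_ord i') ne).
apply: homEqS_trans (hF i) _; rewrite e; exact: homEqS_sym.
Qed.

Lemma homCountS_uniq sp N1 N2 : homCountS sp N1 -> homCountS sp N2 -> N1 = N2.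
Proof. by move=> h1 h2; apply/eqP; rewrite eqn_leq !(homCountS_le h1, homCountS_le h2). Qed.

Lemma mult_eq (A : seq (Gam l)) (S : {set 'I_(size A)}) N :
  homCountS (inSpan S) N -> Defs.mult p q S = N.
Proof.
move=> h; rewrite /Defs.mult.
have := epsilon_spec (inhabits 0%N) (fun N => homCount p q S N) (ex_intro _ N h).
move=> h'; exact: homCountS_uniq h' h.
Qed.

Lemma homCount_of_fin sp (T : finType) (phi : T -> Gam l -> Gel p q) :
  (forall x, isHomS sp (phi x)) ->
  (forall x y, homEqS sp (phi x) (phi y) -> x = y) ->
  (forall f, isHomS sp f -> exists x, homEqS sp f (phi x)) ->
  homCountS sp #|T|.
Proof.
move=> Hh Hi He.
have hsz : size (enum T) = #|T| by rewrite cardE.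
exists (map phi (enum T)); split; first by rewrite size_map.
have nthE : forall i, (i < #|T|)%N -> forall x0,
    nth (fun _ => gone p q) (map phi (enum T)) i = phi (nth x0 (enum T) i).
  by move=> i hi x0; rewrite (nth_map x0) // hsz.
split.
  by move=> i hi; rewrite (nthE i hi (enum_val (Ordinal hi))).
split.
  move=> i j hi hj ne; rewrite (nthE i hi (enum_val (Ordinal hi))) (nthE j hj (enum_val (Ordinal hi))).
  move/Hi => e; apply: ne; apply/eqP.
  by rewrite -(nth_uniq (enum_val (Ordinal hi)) _ _ (enum_uniq T)) ?hsz // e.
move=> f hf; have [x hx] := He f hf; exists (index x (enum T)).
  by rewrite -hsz index_mem mem_enum.
by rewrite (nthE _ _ x) ?nth_index ?mem_enum // -hsz index_mem mem_enum.
Qed.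
End Abs.

Lemma mulmxMnl (m n k : nat) (v : 'M[int]_(1, m)) (B : 'M[int]_(m, n)) :
  (v *+ k) *m B = (v *m B) *+ k.
Proof. elim: k => [|k IH]; by rewrite ?mulr0n ?mul0mx // !mulrS mulmxDl IH. Qed.

Lemma mxMnE (m n k : nat) (M : 'M[int]_(m, n)) i j : (M *+ k) i j = M i j *+ k.
Proof. elim: k => [|k IH]; by rewrite ?mulr0n ?mxE // !mulrS mxE IH. Qed.

Section Count.
Variables l p q : nat.
Variable e : 'rV[int]_l.
Variable R : 'M[int]_l.
Hypothesis he : forall j, e 0 j != 0.
Hypothesis hR : R \in unitmx.

Definition Xm := diag_mx e *m R.
Definition spX (v : Gam l) : Prop := exists u : 'rV[int]_l, v = u *m Xm.
Definition Ri := invmx R.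

Lemma spX_iff v : spX v <-> forall j, (e ord0 j %| (v *m Ri) ord0 j)%Z.
Proof.
split.
  move=> [u ->] j; rewrite /Xm /Ri mulmxA mulmxK // mul_mx_diag mxE.
  exact: dvdz_mull.
move=> h; exists (\row_j (((v *m Ri) ord0 j) %/ e ord0 j)%Z).
rewrite /Xm mulmxA mul_mx_diag.
have -> : \matrix_(i, j) ((\row_j0 ((v *m Ri) ord0 j0 %/ e ord0 j0)%Z) i j * e 0 j) = v *m Ri.
  apply/matrixP => i j; rewrite mxE [(\row__ _) _ _]mxE (ord1 i) divzK //.
by rewrite /Ri mulmxKV.
Qed.

Definition Dn : nat := \prod_(i < l) `|e ord0 i|%N.

Lemma Dn_gt0 : (0 < Dn)%N.
Proof. rewrite /Dn prodn_gt0 // => i; rewrite absz_gt0; exact: he. Qed.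

Lemma e_dvd_Dn i : (`|e ord0 i| %| Dn)%N.
Proof. by rewrite /Dn (bigD1 i) //= dvdn_mulr. Qed.

Lemma tor_all v : inTorS spX v.
Proof.
exists Dn; split; first exact: Dn_gt0.
apply/spX_iff => j; rewrite mulmxMnl mxMnE.
rewrite -mulr_natl; apply: dvdz_mulr.
by rewrite dvdzE natz absz_nat e_dvd_Dn.
Qed.

Lemma cmul_inv a1 a2 z1 z2 : Rplus (Rmult z1 z1) (Rmult z2 z2) = R1 ->
  cmul (a1, a2) (z1, z2) = (R1, R0) -> a1 = z1 /\ a2 = Ropp z2.
Proof.
rewrite /cmul /= => hz [h1 h2].
have e1 : Rmult a1 (Rplus (Rmult z1 z1) (Rmult z2 z2)) = Rplus (Rmult z1 (Rminus (Rmult a1 z1) (Rmult a2 z2))) (Rmult z2 (Rplus (Rmult a1 z2) (Rmult a2 z1))) by ring.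
have e2 : Rmult a2 (Rplus (Rmult z1 z1) (Rmult z2 z2)) = Rminus (Rmult z1 (Rplus (Rmult a1 z2) (Rmult a2 z1))) (Rmult z2 (Rminus (Rmult a1 z1) (Rmult a2 z2))) by ring.
rewrite hz h1 h2 in e1 e2; split; nra.
Qed.

Section Homs.
Variable f : Gam l -> Gel p q.
Hypothesis hf : isHomS spX f.

Lemma hom0 : Defs.geq (f 0) (gone p q).
Proof. by case: hf => _ [_ h]; apply: h; exists 0; rewrite mul0mx. Qed.

Lemma homD x y : Defs.geq (f (x + y)) (gmul (f x) (f y)).
Proof. by case: hf => _ [h _]; apply: h; apply: tor_all. Qed.

Lemma homU x : inG (f x).
Proof. by case: hf => h _; apply: h; apply: tor_all. Qed.

Lemma hom_sp x : spX x -> Defs.geq (f x) (gone p q).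
Proof. by case: hf => _ [_ h]; apply: h. Qed.

Lemma homMn_c v n k : circ (f (v *+ n)) k = cpow (circ (f v) k) n.
Proof.
elim: n => [|n IH1].
  by rewrite mulr0n; have [h1 h2] := hom0; rewrite h1.
have [h1 h2] := homD v (v *+ n).
by rewrite mulrS h1; cbn [circ lin gmul]; rewrite IH1.
Qed.

Lemma homMn_l v n j : lin (f (v *+ n)) j = Rmult (INR n) (lin (f v) j).
Proof.
elim: n => [|n IH2].
  rewrite mulr0n; have [h1 h2] := hom0; rewrite h2 /=; ring.
have [h1 h2] := homD v (v *+ n).
rewrite mulrS h2; cbn [circ lin gmul]; rewrite IH2 S_INR; ring.
Qed.

End Homs.

Lemma hom_ext (f g : Gam l -> Gel p q) : isHomS spX f -> isHomS spX g ->
  (forall i, Defs.geq (f (row i R)) (g (row i R))) -> forall v, Defs.geq (f v) (g v).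
Proof.
move=> hf hg hgen.
pose P v := Defs.geq (f v) (g v).
have P0 : P 0.
  have [a1 b1] := hom0 hf; have [a2 b2] := hom0 hg.
  by split=> i; rewrite ?a1 ?a2 ?b1 ?b2.
have PD : forall x y, P x -> P y -> P (x + y).
  move=> x y [a1 b1] [a2 b2].
  have [c1 d1] := homD hf x y; have [c2 d2] := homD hg x y.
  by split=> i; rewrite ?c1 ?c2 ?d1 ?d2 /= ?a1 ?a2 ?b1 ?b2.
have PN : forall x, P x -> P (- x).
  move=> x [a1 b1].
  have [c1 d1] := homD hf (- x) x; have [c2 d2] := homD hg (- x) x.
  have [e1 _] := hom0 hf; have [e2 _] := hom0 hg.
  have [_ f1] := hom0 hf; have [_ f2] := hom0 hg.
  rewrite addNr in c1 d1 c2 d2.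
  split=> i.
    have u := homU hf x i; have u' := homU hg x i.
    have E1 := c1 i; rewrite e1 /= in E1.
    have E2 := c2 i; rewrite e2 /= in E2.
    rewrite -a1 in E2.
    move: E1 E2 u; case: (circ (f x) i) => z1 z2.
    case: (circ (f (- x)) i) => x1 x2; case: (circ (g (- x)) i) => y1 y2 /=.
    move=> E1 E2 u.
    have [-> ->] := cmul_inv u (esym E1).
    by have [-> ->] := cmul_inv u (esym E2).
  have E1 := d1 i; have E2 := d2 i; rewrite f1 f2 /= b1 in E1 E2.
  have : lin (f (- x)) i = Ropp (lin (g x) i) by lra.
  by move=> ->; lra.
have PMn : forall x n, P x -> P (x *+ n).
  move=> x n hx; elim: n => [|n IH]; first by rewrite mulr0n.
  by rewrite mulrS; apply: PD.
have PZ : forall x (c : int), P x -> P (c *: x).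
  move=> x [n|n] hx.
    by rewrite -natz scaler_nat; apply: PMn.
  by rewrite NegzE scaleNr -natz scaler_nat; apply/PN/PMn.
move=> v.
have -> : v = (v *m Ri) *m R by rewrite /Ri mulmxKV.
rewrite mulmx_sum_row.
apply: (big_ind P) => // i _; apply: PZ; exact: hgen.
Qed.

Definition mi (i : 'I_l) : nat := (Dn %/ `|e ord0 i|)%N.
Definition Tin := {dffun forall i : 'I_l, 'I_(`|e ord0 i|)}.
Definition Tt := {ffun 'I_p -> Tin}.

Definition Nk (x : Tt) (k : 'I_p) (v : Gam l) : int :=
  \sum_(i < l) (v *m Ri) ord0 i * Posz (x k i) * Posz (mi i).

Definition phi (x : Tt) (v : Gam l) : Gel p q :=
  mkGel (fun k => cc Dn (Nk x k v)) (fun _ => R0).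

Lemma mi_gt0 i : (0 < mi i)%N.
Proof.
rewrite /mi divn_gt0; first by apply: dvdn_leq; [exact: Dn_gt0 | exact: e_dvd_Dn].
by rewrite absz_gt0.
Qed.

Lemma Dn_mi i : Dn = (`|e ord0 i| * mi i)%N.
Proof. by rewrite /mi mulnC divnK // e_dvd_Dn. Qed.

Lemma Nk_add x k v w : Nk x k (v + w) = Nk x k v + Nk x k w.
Proof.
rewrite /Nk -big_split /=; apply: eq_bigr => i _.
by rewrite mulmxDl mxE !mulrDl.
Qed.

Lemma Nk_sp x k v : spX v -> exists t, Nk x k v = Posz Dn * t.
Proof.
move=> /spX_iff h.
have : (Posz Dn %| Nk x k v)%Z.
  rewrite /Nk; apply: rpred_sum => i _.
  rewrite dvdzE !abszM /= (Dn_mi i).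
  have h1 : (`|e ord0 i| %| `|(v *m Ri) ord0 i|)%N by rewrite -dvdzE; exact: h.
  apply: (dvdn_trans (dvdn_mul h1 (dvdnn (mi i)))).
  by rewrite mulnAC dvdn_mulr.
by case/dvdzP => t ->; exists t; rewrite mulrC.
Qed.

Lemma row_Ri i : row i R *m Ri = delta_mx 0 i.
Proof. by rewrite rowE /Ri mulmxK. Qed.

Lemma Nk_row x k i : Nk x k (row i R) = Posz (x k i) * Posz (mi i).
Proof.
rewrite /Nk row_Ri (bigD1 i) //= big1 ?addr0.
  by rewrite mxE !eqxx mul1r.
by move=> j /negbTE hj; rewrite mxE hj andbF !mul0r.
Qed.

Lemma phi_hom x : isHomS spX (phi x).
Proof.
split.
  move=> v _ k; rewrite /phi /=.
  exact: (cc_unit Dn (Nk x k v)).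
split.
  move=> v w _ _; split=> k; rewrite /phi /gmul /=.
    by rewrite Nk_add cc_add.
  by rewrite Rplus_0_l.
move=> s hs; split=> k; rewrite /phi /gone /=; last by [].
have [t ->] := Nk_sp x k hs.
exact: cc_mul Dn_gt0.
Qed.

Lemma phi_inj x y : homEqS spX (phi x) (phi y) -> x = y.
Proof.
move=> h; apply/ffunP => k; apply/ffunP => i.
have [h1 _] := h (row i R) (tor_all _).
have := h1 k; rewrite /phi /= !Nk_row => /(cc_eq Dn_gt0) [t ht].
apply/val_inj => /=.
have hm := mi_gt0 i; have hE : (0 < `|e ord0 i|)%N by rewrite absz_gt0.
have hx := ltn_ord (x k i); have hy := ltn_ord (y k i).
move: ht; rewrite (Dn_mi i).
move: (nat_of_ord (x k i)) (nat_of_ord (y k i)) hx hy => a b ha hb.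
move: (mi i) (`|e ord0 i|%N) hm hE ha hb => m E hm hE ha hb ht.
have ht' : (Posz a - Posz b) * Posz m = (Posz E * t) * Posz m.
  by rewrite mulrBl ht PoszM; nia.
have hm0 : Posz m != 0 by lia.
have e1 := mulIf hm0 ht'.
have ht0 : t = 0.
  case: (ltrgtP t 0) => // htt.
    have : Posz E * t <= - Posz E by rewrite -mulrN1 ler_pM2l; [lia | lia].
    lia.
  have : Posz E <= Posz E * t by rewrite -{1}(mulr1 (Posz E)) ler_pM2l; [lia | lia].
  lia.
rewrite ht0 mulr0 in e1; lia.
Qed.

Lemma row_sp i : spX (row i R *+ `|e ord0 i|).
Proof.
apply/spX_iff => j; rewrite mulmxMnl row_Ri mxMnE mxE.
case: (eqVneq j i) => [->|hj]; rewrite ?eqxx ?(negbTE hj) /=.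
  by rewrite dvdzE (natz `|e ord0 i|) absz_nat.
by change (e ord0 j %| (0 : int) *+ `|e ord0 i|)%Z; rewrite mul0rn dvdz0.
Qed.

Lemma phi_surj f : isHomS spX f -> exists x, homEqS spX f (phi x).
Proof.
move=> hf.
have hroot : forall k i, exists u : 'I_(`|e ord0 i|),
    circ (f (row i R)) k = cc Dn (Posz u * Posz (mi i)).
  move=> k i.
  have hE : (0 < `|e ord0 i|)%N by rewrite absz_gt0.
  have hz := homU hf (row i R) k.
  have [hs1 _] := hom_sp hf (row_sp i).
  have hpow : cpow (circ (f (row i R)) k) `|e ord0 i| = (R1, R0)
    by rewrite -homMn_c //; exact: hs1 k.
  move: hz hpow; case: (circ (f (row i R)) k) => z1 z2 hz hpow.
  have [s hs] := cc_root hE (e_dvd_Dn i) Dn_gt0 hz hpow.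
  move: (e_dvd_Dn i) (Dn_mi i) hs; rewrite -/(mi i).
  move: (mi i) (`|e ord0 i|%N) hE => m E hE _ hDn hs.
  have r0 : 0 <= (s %% Posz E)%Z by apply: modz_ge0; lia.
  have rE : (s %% Posz E)%Z < Posz E by apply: ltz_pmod; lia.
  have hr : (absz (s %% Posz E)%Z < E)%N by lia.
  exists (Ordinal hr); rewrite hs /=.
  have hd := divz_eq s (Posz E).
  have -> : s * Posz m = Posz (absz (s %% Posz E)%Z) * Posz m + Posz Dn * (s %/ Posz E)%Z.
    rewrite hDn PoszM gez0_abs //; nia.
  rewrite cc_add cc_mul ?Dn_gt0 //.
  case: (cc Dn _) => c1 c2; rewrite /cmul /=; f_equal; ring.
have hx : forall k, exists u : Tin, forall i,
    circ (f (row i R)) k = cc Dn (Posz (u i) * Posz (mi i)).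
  move=> k; have [u hu] := fin_all_exists (hroot k).
  by exists [ffun i => u i] => i; rewrite ffunE.
have [u hu] := fin_all_exists hx.
exists [ffun k => u k] => v _.
apply: (hom_ext hf (phi_hom _)) => i; split => k.
  by rewrite /phi /= Nk_row ffunE; exact: hu k i.
rewrite /phi /=.
have := homMn_l hf (row i R) `|e ord0 i| k.
have [_ hs2] := hom_sp hf (row_sp i); rewrite hs2 /=.
have : INR `|e ord0 i| <> R0 by apply: INR_pos; rewrite absz_gt0.
move=> hn h0; symmetry in h0; case: (Rmult_integral _ _ h0) => //.
Qed.

Lemma card_Tin : #|Tin| = Dn.
Proof.
rewrite /Tin card_dep_ffun foldrE big_map big_enum /Dn /=.
by apply: eq_bigr => i _; rewrite card_ord.
Qed.

Lemma count_spX : homCountS p q spX (Dn ^ p).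
Proof.
have -> : (Dn ^ p)%N = #|Tt| by rewrite /Tt card_ffun card_Tin card_ord.
apply: (homCount_of_fin (phi_hom) (@phi_inj) phi_surj).
Qed.

Lemma det_Xm : `|\det Xm|%N = Dn.
Proof.
rewrite /Xm det_mulmx det_diag abszM.
have -> : `|\det R|%N = 1%N.
  move: hR; rewrite unitmxE; case: (\det R) => [[|[|n]]|[|n]] //.
rewrite muln1 /Dn.
elim/big_rec2: _ => // i a b _ <-.
by rewrite abszM.
Qed.

End Count.

Definition spanM m l (K : 'M[int]_(m, l)) (v : Gam l) : Prop := exists u : 'rV_m, v = u *m K.

Definition Jm n l : 'M[int]_(n, l) := \matrix_(i, j) ((i == j :> nat)%:R).

Lemma D_J n l (d : seq int) :
  let e := \row_(j < l) (if (j < n)%N then d`_j else 0) in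
  (\matrix_(i < n, j < l) (d`_i *+ (i == j :> nat))) = Jm n l *m diag_mx e.
Proof.
move=> e; apply/matrixP => i j; rewrite mul_mx_diag !mxE.
case: (eqVneq (i : nat) j) => [hij|hij]; last by rewrite mulr0n mul0r.
by rewrite mulr1n mul1r -hij ltn_ord hij.
Qed.

Lemma J_D n l (d : seq int) :
  let e := \row_(j < l) (if (j < n)%N then d`_j else 0) in
  diag_mx e = (Jm n l)^T *m (\matrix_(i < n, j < l) (d`_i *+ (i == j :> nat))).
Proof.
move=> e; apply/matrixP => i j; rewrite !mxE.
case: (ltnP i n) => hi.
  rewrite (bigD1 (Ordinal hi)) //= big1 ?addr0.
    by rewrite !mxE eqxx mul1r.
  move=> k hk; rewrite !mxE.
  case: (eqVneq (k : nat) i) => [hki|]; last by rewrite mul0r.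
  by case/eqP: hk; apply: val_inj.
rewrite big1 ?mul0rn //.
move=> k _; rewrite !mxE.
case: (eqVneq (k : nat) i) => [hki|]; last by rewrite mul0r.
by move: (ltn_ord k); rewrite hki ltnNge hi.
Qed.

Lemma rank_map_le m n k (A : 'M[int]_(m, n)) (B : 'M[int]_(n, k)) :
  (\rank (map_mx (intr : int -> rat) (A *m B)) <= \rank (map_mx (intr : int -> rat) B))%N.
Proof. rewrite map_mxM; exact: mxrankM_maxr. Qed.

Lemma keyK p q m l (K : 'M[int]_(m, l)) : exists X : 'M[int]_l,
  (forall v, spanM K v <-> spanM X v) /\
  ((\rank (map_mx (intr : int -> rat) K) == l) = (\det X != 0)) /\
  (\det X != 0 -> homCountS p q (spanM X) (`|\det X| ^ p)%N).
Proof.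
have [L hL [Rr hRr [d _ hK]]] := int_Smith_normal_form K.
set e := \row_(j < l) (if (j < m)%N then d`_j else 0).
exists (Xm e Rr).
have hK' : K = (L *m Jm m l) *m Xm e Rr by rewrite hK D_J /Xm !mulmxA.
have hX : Xm e Rr = ((Jm m l)^T *m invmx L) *m K.
  rewrite hK /Xm J_D !mulmxA; congr (_ *m _); congr (_ *m _).
  by rewrite -(mulmxA _ (invmx L)) mulVmx // mulmx1.
split.
  move=> v; split => -[u ->].
    by exists (u *m (L *m Jm m l)); rewrite hK' mulmxA.
  by exists (u *m ((Jm m l)^T *m invmx L)); rewrite hX mulmxA.
split.
  have r1 := rank_map_le (L *m Jm m l) (Xm e Rr); rewrite -hK' in r1.
  have r2 := rank_map_le ((Jm m l)^T *m invmx L) K; rewrite -hX in r2.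
  have -> : \rank (map_mx (intr : int -> rat) K) = \rank (map_mx (intr : int -> rat) (Xm e Rr)).
    by apply/eqP; rewrite eqn_leq r1 r2.
  change (row_free (map_mx (intr : int -> rat) (Xm e Rr)) = (\det (Xm e Rr) != 0)).
  by rewrite row_free_unit unitmxE unitfE det_map_mx intr_eq0.
move=> hdet.
have he : forall j, e 0 j != 0.
  move=> j; apply/eqP => hj; move: hdet; rewrite /Xm det_mulmx det_diag (bigD1 j) //= hj.
  by rewrite !mul0r eqxx.
have := count_spX p q he hRr.
by rewrite (det_Xm e hRr).
Qed.

Lemma span_sub_mx m n l (X : 'M[int]_(m, l)) (Y : 'M[int]_(n, l)) :
  (forall v, spanM X v -> spanM Y v) -> exists U, X = U *m Y.
Proof.
move=> h.
have : forall i, exists u : 'rV_n, row i X = u *m Y.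
  by move=> i; apply: h; exists (delta_mx 0 i); rewrite rowE.
case/fin_all_exists => Uf hU.
exists (\matrix_(i, j) Uf i 0 j); apply/row_matrixP => i.
rewrite row_mul hU; congr (_ *m _); apply/rowP => j; by rewrite !mxE.
Qed.

Lemma spaneq_det l (X Y : 'M[int]_l) : (forall v, spanM X v <-> spanM Y v) ->
  `|\det X|%N = `|\det Y|%N.
Proof.
move=> h.
have [U hU] := span_sub_mx (fun v => proj1 (h v)).
have [V hV] := span_sub_mx (fun v => proj2 (h v)).
have e1 : `|\det X|%N = (`|\det U| * `|\det Y|)%N by rewrite {1}hU det_mulmx abszM.
have e2 : `|\det Y|%N = (`|\det V| * `|\det X|)%N by rewrite {1}hV det_mulmx abszM.
move: e1 e2; move: (`|\det X|%N) (`|\det Y|%N) (`|\det U|%N) (`|\det V|%N) => x y u w e1 e2.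
case: x e1 e2 => [|x] e1 e2; first by rewrite e2 muln0.
have : (u * w = 1)%N.
  have : (x.+1 * (u * w) = x.+1 * 1)%N by rewrite muln1 {2}e1 e2; nia.
  by move/eqP; rewrite eqn_mul2l /= => /eqP.
move/eqP; rewrite muln_eq1 => /andP [/eqP hu _].
by rewrite e1 hu mul1n.
Qed.

Definition Bmat l (A : seq (Gam l)) (S : {set 'I_(size A)}) : 'M[int]_(size A, l) :=
  \matrix_(i < size A) (if i \in S then A`_i else 0).

Lemma inSpan_Bmat l (A : seq (Gam l)) (S : {set 'I_(size A)}) v :
  inSpan S v <-> spanM (Bmat S) v.
Proof.
have key : forall c : 'I_(size A) -> int,
    \sum_(i in S) c i *: A`_i = \sum_i c i *: row i (Bmat S).
  move=> c; rewrite big_mkcond /=; apply: eq_bigr => i _.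
  by rewrite rowK; case: (i \in S); rewrite ?scaler0.
split.
  move=> [c ->]; exists (\row_i c i); rewrite mulmx_sum_row key.
  by apply: eq_bigr => i _; rewrite mxE.
move=> [u ->]; exists (fun i => u 0 i); by rewrite mulmx_sum_row key.
Qed.

Lemma rk_Bmat l (A : seq (Gam l)) (S : {set 'I_(size A)}) :
  rk S = \rank (map_mx (intr : int -> rat) (Bmat S)).
Proof.
rewrite /rk; congr (\rank _); apply/matrixP => i j; rewrite !mxE.
by case: (i \in S); rewrite ?mxE.
Qed.

Lemma term_eq l p q (A : seq (Gam l)) (S : {set 'I_(size A)}) : (0 < p)%N ->
  exists X : 'M[int]_l, (forall v, spanM (Bmat S) v <-> spanM X v) /\
  (((-1) ^+ #|S| * (Defs.mult p q S)%:R) *: 'X^(l - rk S)).[0] = (-1) ^+ #|S| * `|\det X| ^+ p.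
Proof.
move=> hp.
have [X [hs [hr hc]]] := keyK p q (Bmat S).
exists X; split => //.
rewrite hornerZ hornerXn expr0n -mulrA; congr (_ * _).
have hle : (rk S <= l)%N by rewrite rk_Bmat rank_leq_col.
case: (eqVneq (\det X) 0) => hd.
  have : rk S != l by rewrite rk_Bmat hr hd.
  move=> hne; have -> : (l - rk S == 0)%N = false by apply/negbTE; rewrite subn_eq0; lia.
  by rewrite mulr0 hd normr0 expr0n eqn0Ngt hp.
have : rk S == l by rewrite rk_Bmat hr hd.
move/eqP => ->; rewrite subnn eqxx mulr1.
have -> : Defs.mult p q S = (`|\det X| ^ p)%N.
  apply: mult_eq; apply: homCountS_ext (hc hd) => v.
  by rewrite inSpan_Bmat hs.
by rewrite natrX natz abszE.
Qed.

Lemma inSpan_map l (M : 'M[int]_l) (A : seq (Gam l))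
  (S' : {set 'I_(size (map (applyHom M) A))}) v :
  inSpan S' v <-> exists w, inSpan [set cast_ord (size_map (applyHom M) A) x | x in S'] w /\ v = w *m M.
Proof.
set hs := size_map (applyHom M) A.
have nthA : forall i' : 'I_(size (map (applyHom M) A)), (map (applyHom M) A)`_i' = A`_(cast_ord hs i') *m M.
  move=> i'; rewrite (nth_map 0) //; rewrite -hs; exact: ltn_ord.
have key : forall c : 'I_(size A) -> int,
    \sum_(i in [set cast_ord hs x | x in S']) c i *: A`_i =
    \sum_(i' in S') c (cast_ord hs i') *: A`_(cast_ord hs i').
  move=> c; rewrite big_imset //; move=> x y _ _; exact: cast_ord_inj.
have key2 : forall c' : 'I_(size (map (applyHom M) A)) -> int,
    \sum_(i' in S') c' i' *: (map (applyHom M) A)`_i' =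
    (\sum_(i' in S') c' i' *: A`_(cast_ord hs i')) *m M.
  move=> c'; rewrite mulmx_suml; apply: eq_bigr => i' _.
  by rewrite nthA scalemxAl.
split.
  move=> [c' ->]; rewrite key2.
  exists (\sum_(i' in S') c' i' *: A`_(cast_ord hs i')); split => //.
  exists (fun i => c' (cast_ord (esym hs) i)); rewrite key.
  by apply: eq_bigr => i' _; rewrite cast_ordK.
move=> [w [[c ->] ->]]; exists (fun i' => c (cast_ord hs i')).
by rewrite key2 key.
Qed.

Theorem mainTheorem7 (l p q : nat) (M : 'M[int]_l) (A : seq 'rV[int]_l)
  (hp : (0 < p)%N) :
  (chiG p q (map (applyHom M) A)).[0] = `|\det M| ^+ p * (chiG p q A).[0].
Proof.
rewrite /chiG !horner_sum mulr_sumr.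
set hs := size_map (applyHom M) A.
pose h := fun S' : {set 'I_(size (map (applyHom M) A))} => [set cast_ord hs x | x in S'].
rewrite [RHS](reindex h) /=; last first.
  apply: onW_bij; apply: (@Bijective _ _ h (fun S => [set cast_ord (esym hs) x | x in S])) => S.
    rewrite /h -imset_comp (eq_imset (g := id)) ?imset_id // => x /=; exact: cast_ordK.
  rewrite /h -imset_comp (eq_imset (g := id)) ?imset_id // => x /=; exact: cast_ordKV.
apply: eq_bigr => S' _.
have [X' [hX' ->]] := term_eq q S' hp.
have [X [hX ->]] := term_eq q (h S') hp.
have hcard : #|h S'| = #|S'| by rewrite card_imset //; exact: cast_ord_inj.
rewrite hcard.
have hsp : forall v, spanM X' v <-> spanM (X *m M) v.
  move=> v; rewrite -hX' -inSpan_Bmat inSpan_map; split.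
    move=> [w [hw ->]]; move: hw; rewrite inSpan_Bmat hX => -[u ->].
    by exists u; rewrite mulmxA.
  move=> [u ->]; exists (u *m X); split; last by rewrite mulmxA.
  by rewrite inSpan_Bmat hX; exists u.
have hd := spaneq_det hsp.
rewrite det_mulmx abszM in hd.
rewrite -!abszE hd PoszM exprMn.
rewrite [RHS]mulrCA; congr (_ * _); exact: mulrC.
Qed.
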